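(* For all integers $k_1,k_2,d_1,d_2\geq 1$ there exist graphs $G_1$ and $G_2$ such that, for $i\in\{1,2\}$, $G_i$ has maximum degree $\Delta_i:=k_id_i$ and degeneracy $d_i$, and $$\operatorname{degen}(G_1\boxtimes G_2)=d_1+d_2+\min\{d_1\Delta_2,\ d_2\Delta_1\}.$$
   Context: The degeneracy $\operatorname{degen}(G)$ of a graph $G$ is the minimum integer $d$ such that every subgraph of $G$ has minimum degree at most $d$. The strong product $G_1 \boxtimes G_2$ has vertex set $V(G_1)\times V(G_2)$, with distinct vertices $(a,v),(b,u)$ adjacent iff ($a=b$ or $ab\in E(G_1)$) and ($u=v$ or $uv\in E(G_2)$). *)

(* Defs.v *)
From mathcomp Require Import all_boot.
Set Implicit Arguments. Unset Strict Implicit. Unset Printing Implicit Defensive.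

Definition simple_graph (T : finType) (e : rel T) : Prop :=
  (forall x y, e x y = e y x) /\ (forall x, e x x = false).

Definition deg (T : finType) (e : rel T) (v : T) : nat := #|[set u | e v u]|.

Definition maxdeg (T : finType) (e : rel T) : nat := \max_(v : T) deg e v.

Definition subgraphs_mindeg_le (T : finType) (e : rel T) (d : nat) : Prop :=
  forall (S : {set T}) (f : rel T),
    (forall x y, f x y = f y x) ->
    (forall x y, f x y -> [&& e x y, x \in S & y \in S]) ->
    S != set0 ->
    exists2 v, v \in S & #|[set u in S | f v u]| <= d.

Definition is_degeneracy (T : finType) (e : rel T) (d : nat) : Prop :=
  subgraphs_mindeg_le e d /\ (forall d', subgraphs_mindeg_le e d' -> d <= d').

Definition strong_prod (T1 T2 : finType) (e1 : rel T1) (e2 : rel T2)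
  : rel (T1 * T2)%type :=
  fun p q => [&& p != q, (p.1 == q.1) || e1 p.1 q.1 & (p.2 == q.2) || e2 p.2 q.2].

(* Main.v *)
Require Import Defs.
From mathcomp Require Import all_boot zify.
Set Implicit Arguments. Unset Strict Implicit. Unset Printing Implicit Defensive.

Section Gadget.
Variables (d k : nat).
Hypothesis hk : 0 < k.
Definition GT := ('I_d.+1 * 'I_k)%type.
Definition ge : rel GT := fun p q => (p.1 != q.1) && ((nat_of_ord p.2 == 0) || (nat_of_ord q.2 == 0)).
Definition Cl : {set GT} := [set u | nat_of_ord u.2 == 0].
Definition Zk : {set 'I_k} := [set i | nat_of_ord i == 0].
Definition Nb (x : GT) : {set GT} := [set u | ge x u].
Definition Nc (x : GT) : {set GT} := [set u | (u == x) || ge x u].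

Lemma ge_sym x y : ge x y = ge y x.
Proof. by rewrite /ge eq_sym orbC. Qed.
Lemma ge_irr x : ge x x = false.
Proof. by rewrite /ge eqxx. Qed.
Lemma ge_simple : simple_graph ge.
Proof. split; [exact: ge_sym | exact: ge_irr]. Qed.

Lemma card_Zk : #|Zk| = 1.
Proof.
have -> : Zk = [set Ordinal hk].
  by apply/setP => i; rewrite !inE -(inj_eq val_inj).
by rewrite cards1.
Qed.

Lemma Nb_C x : x \in Cl -> Nb x = setX [set~ x.1] setT.
Proof.
rewrite inE => hx; apply/setP => -[b t]; rewrite !inE /ge /= hx /= andbT.
by rewrite andbT eq_sym.
Qed.

Lemma Nb_NC x : x \notin Cl -> Nb x = setX [set~ x.1] Zk.
Proof.
rewrite inE => hx; apply/setP => -[b t]; rewrite !inE /ge /= (negbTE hx) /=.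
by rewrite eq_sym.
Qed.

Lemma NbC x : Nb x :&: Cl = setX [set~ x.1] Zk.
Proof.
apply/setP => -[b t]; rewrite !inE /ge /=.
by case: (nat_of_ord t == 0); rewrite ?orbT ?andbT ?andbF // eq_sym.
Qed.

Lemma card_NbC x : #|Nb x :&: Cl| = d.
Proof. by rewrite NbC cardsX cardsC1 card_Zk card_ord muln1. Qed.

Lemma card_Nb_C x : x \in Cl -> #|Nb x| = d * k.
Proof. by move=> hx; rewrite Nb_C // cardsX cardsC1 cardsT !card_ord. Qed.

Lemma card_Nb_NC x : x \notin Cl -> #|Nb x| = d.
Proof. by move=> hx; rewrite Nb_NC // cardsX cardsC1 card_Zk card_ord muln1. Qed.

Lemma Nb_NC_sub x : x \notin Cl -> Nb x \subset Cl.
Proof. by move=> hx; rewrite (Nb_NC hx) -(NbC x) subsetIr. Qed.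

Lemma Nc_U x : Nc x = x |: Nb x.
Proof. by apply/setP => u; rewrite !inE. Qed.

Lemma card_Nc x : #|Nc x| = #|Nb x|.+1.
Proof. by rewrite Nc_U cardsU1 inE ge_irr. Qed.

Lemma card_Nb_le x : #|Nb x| <= d * k.
Proof.
case: (boolP (x \in Cl)) => hx; first by rewrite card_Nb_C.
by rewrite card_Nb_NC // leq_pmulr.
Qed.

Lemma deg_eq x : deg ge x = #|Nb x|.
Proof. by []. Qed.

Lemma maxdeg_ge : maxdeg ge = k * d.
Proof.
apply/eqP; rewrite eqn_leq; apply/andP; split.
  by apply/bigmax_leqP => i _; rewrite mulnC deg_eq card_Nb_le.
have h0 : ((ord0 : 'I_d.+1), Ordinal hk) \in Cl by rewrite inE.
by rewrite mulnC -(card_Nb_C h0); apply: (leq_bigmax (F := deg ge)).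
Qed.

Lemma degen_ge : is_degeneracy ge d.
Proof.
split.
  move=> S f fsym fsub /set0Pn [v0 hv0].
  case: (boolP [exists v in S, v \notin Cl]).
    move=> /existsP [v /andP [hvS hv]]; exists v => //.
    apply: (leq_trans _ (eq_leq (card_Nb_NC hv))); apply: subset_leq_card; apply/subsetP => u.
    by rewrite !inE => /andP [_ /fsub /andP [->]].
  rewrite negb_exists => /forallP hall; exists v0 => //.
  apply: (leq_trans _ (eq_leq (card_NbC v0))); apply: subset_leq_card; apply/subsetP => u.
  rewrite !inE => /andP [huS /fsub /andP [-> _]] /=.
  by move: (hall u); rewrite huS /= inE negbK.
move=> d' H.
have [||v _ hv] := H setT ge ge_sym.
- by move=> x y h; rewrite h !inE.
- by apply/set0Pn; exists ((ord0 : 'I_d.+1), Ordinal hk); rewrite inE.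
apply: leq_trans hv; rewrite -{1}(card_NbC v); apply: subset_leq_card.
by apply/subsetP => u; rewrite !inE => /andP [-> _].
Qed.
End Gadget.

Lemma mindeg_set (T : finType) (e : rel T) d :
  (forall x y, e x y = e y x) -> subgraphs_mindeg_le e d ->
  forall X : {set T}, X != set0 -> exists2 x, x \in X & #|[set u in X | e x u]| <= d.
Proof.
move=> esym H X hX.
pose g := fun x y => [&& e x y, x \in X & y \in X].
have g1 : forall x y, g x y = g y x by move=> x y; rewrite /g esym; case: (x \in X); case: (y \in X).
have g2 : forall x y, g x y -> [&& e x y, x \in X & y \in X] by [].
have [v hv hc] := H X g g1 g2 hX.
exists v => //; apply: leq_trans hc; apply: subset_leq_card; apply/subsetP => u.
by rewrite !inE /g => /andP [hu he]; rewrite hu he hv.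
Qed.

Lemma card_cl_le (T : finType) (e : rel T) y :
  #|[set u | (u == y) || e y u]| <= (maxdeg e).+1.
Proof.
have -> : [set u | (u == y) || e y u] = y |: [set u | e y u].
  by apply/setP => u; rewrite !inE.
apply: (leq_trans (leq_card_setU _ _)); rewrite cards1 add1n ltnS.
exact: (leq_bigmax (F := deg e)).
Qed.

Lemma prod_upper (T1 T2 : finType) (e1 : rel T1) (e2 : rel T2) d1 d2 M2 :
  simple_graph e1 -> simple_graph e2 ->
  subgraphs_mindeg_le e1 d1 -> subgraphs_mindeg_le e2 d2 -> maxdeg e2 <= M2 ->
  subgraphs_mindeg_le (strong_prod e1 e2) (d1 * M2.+1 + d2).
Proof.
move=> [s1 _] [s2 _] H1 H2 hM S f fsym fsub hS.
have [p0 hp0] := set0Pn _ hS.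
pose X := [set p.1 | p in S].
have [x hxX hx] : exists2 x, x \in X & #|[set u in X | e1 x u]| <= d1.
  by apply: (mindeg_set s1 H1); apply/set0Pn; exists p0.1; apply: imset_f.
have [p hpS hpx] := imsetP hxX.
pose Y := [set y | (x, y) \in S].
have [y hyY hy] : exists2 y, y \in Y & #|[set u in Y | e2 y u]| <= d2.
  by apply: (mindeg_set s2 H2); apply/set0Pn; exists p.2; rewrite inE hpx -surjective_pairing.
have hv : (x, y) \in S by move: hyY; rewrite inE.
exists (x, y) => //.
pose A := setX [set x] [set u in Y | e2 y u].
pose B := setX [set u in X | e1 x u] [set u | (u == y) || e2 y u].
apply: (@leq_trans #|A :|: B|).
  apply: subset_leq_card; apply/subsetP => -[a b].
  rewrite !inE => /andP [huS /fsub /and3P [hsp _ _]].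
  move: hsp; rewrite /strong_prod /= => /and3P [hne h1 h2].
  case: (eqVneq x a) => [exa | hxa]; first subst a.
    apply/orP; left; rewrite huS /=.
    move: h2; case: (eqVneq y b) => [eyb | //]; subst b; by rewrite eqxx in hne.
  move: h1; rewrite (negbTE hxa) /= => h1.
  rewrite h1 andbT eq_sym h2 andbT.
  by apply/imsetP; exists (a, b).
apply: (leq_trans (leq_card_setU _ _)); rewrite addnC; apply: leq_add.
  by rewrite cardsX; apply: leq_mul => //; apply: (leq_trans (card_cl_le e2 y)).
by rewrite cardsX cards1 mul1n.
Qed.

Lemma prod_upper2 (T1 T2 : finType) (e1 : rel T1) (e2 : rel T2) d1 d2 M1 :
  simple_graph e1 -> simple_graph e2 ->
  subgraphs_mindeg_le e1 d1 -> subgraphs_mindeg_le e2 d2 -> maxdeg e1 <= M1 ->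
  subgraphs_mindeg_le (strong_prod e1 e2) (d2 * M1.+1 + d1).
Proof.
move=> [s1 _] [s2 _] H1 H2 hM S f fsym fsub hS.
have [p0 hp0] := set0Pn _ hS.
pose X := [set p.2 | p in S].
have [y hyX hy] : exists2 y, y \in X & #|[set u in X | e2 y u]| <= d2.
  by apply: (mindeg_set s2 H2); apply/set0Pn; exists p0.2; apply: imset_f.
have [p hpS hpy] := imsetP hyX.
pose Y := [set x | (x, y) \in S].
have [x hxY hx] : exists2 x, x \in Y & #|[set u in Y | e1 x u]| <= d1.
  by apply: (mindeg_set s1 H1); apply/set0Pn; exists p.1; rewrite inE hpy -surjective_pairing.
have hv : (x, y) \in S by move: hxY; rewrite inE.
exists (x, y) => //.
pose A := setX [set u in Y | e1 x u] [set y].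
pose B := setX [set u | (u == x) || e1 x u] [set u in X | e2 y u].
apply: (@leq_trans #|A :|: B|).
  apply: subset_leq_card; apply/subsetP => -[a b].
  rewrite !inE => /andP [huS /fsub /and3P [hsp _ _]].
  move: hsp; rewrite /strong_prod /= => /and3P [hne h1 h2].
  case: (eqVneq y b) => [eyb | hyb]; first subst b.
    apply/orP; left; rewrite huS /= andbT.
    move: h1; case: (eqVneq x a) => [exa | //]; subst a; by rewrite eqxx in hne.
  move: h2; rewrite (negbTE hyb) /= => h2.
  rewrite andbF /= h2 andbT eq_sym h1 /=.
  by apply/imsetP; exists (a, b).
apply: (leq_trans (leq_card_setU _ _)); rewrite addnC; apply: leq_add.
  by rewrite cardsX mulnC; apply: leq_mul => //; apply: (leq_trans (card_cl_le e1 x)).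
by rewrite cardsX cards1 muln1.
Qed.

Lemma prod_lower d1 k1 d2 k2 (hk1 : 0 < k1) (hk2 : 0 < k2) D :
  D <= d1 * (d2 * k2) + d1 + d2 -> D <= d2 * (d1 * k1) + d1 + d2 ->
  forall d', subgraphs_mindeg_le (strong_prod ((@ge d1 k1)) ((@ge d2 k2))) d' -> D <= d'.
Proof.
move=> hD1 hD2 d' H.
pose sp := strong_prod ((@ge d1 k1)) ((@ge d2 k2)).
have spsym : forall p q, sp p q = sp q p.
  move=> [a b] [c e]; rewrite /sp /strong_prod /= eq_sym [c == a]eq_sym [e == b]eq_sym.
  by rewrite (ge_sym a c) (ge_sym b e).
pose S := [set p : (@GT d1 k1) * (@GT d2 k2) | (p.1 \in (@Cl d1 k1)) || (p.2 \in (@Cl d2 k2))].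
pose f p q := [&& sp p q, p \in S & q \in S].
have fsym : forall p q, f p q = f q p.
  by move=> p q; rewrite /f spsym; case: (p \in S); case: (q \in S).
have fsub : forall p q, f p q -> [&& sp p q, p \in S & q \in S] by [].
have hSne : S != set0.
  by apply/set0Pn; exists (((ord0 : 'I_d1.+1), Ordinal hk1), ((ord0 : 'I_d2.+1), Ordinal hk2)); rewrite !inE.
have [[x y] hvS hv] := H S f fsym fsub hSne.
suff [W hW hc] : exists2 W : {set (@GT d1 k1) * (@GT d2 k2)}, W \subset [set u in S | f (x, y) u] & D <= #|W|.
  by apply: leq_trans hc _; apply: leq_trans (subset_leq_card hW) hv.
have memW : forall a b, ((a \in (@Cl d1 k1)) || (b \in (@Cl d2 k2))) ->
    (x, y) != (a, b) -> (x == a) || ge x a -> (y == b) || ge y b ->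
    (a, b) \in [set u in S | f (x, y) u].
  by move=> a b h1 h2 h3 h4; move: h1; rewrite !inE /f /sp /strong_prod /= h2 h3 h4 hvS !inE /= => ->.
have NcE1 : forall a, (a \in Nc x) = (x == a) || ge x a.
  by move=> a; rewrite inE eq_sym.
have NcE2 : forall b, (b \in Nc y) = (y == b) || ge y b.
  by move=> b; rewrite inE eq_sym.
case: (boolP (x \in (@Cl d1 k1))) => hx; case: (boolP (y \in (@Cl d2 k2))) => hy.
-
  exists (setX (Nc x :&: (@Cl d1 k1)) (Nc y) :\ (x, y)).
    apply/subsetP => -[a b] /setD1P [hne /setXP [/setIP [ha hac] hb]].
    apply: memW; first by rewrite hac.
      by rewrite eq_sym.
      by rewrite -NcE1.
    by rewrite -NcE2.
  have e1 : Nc x :&: (@Cl d1 k1) = x |: (Nb x :&: (@Cl d1 k1)).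
    by apply/setP => a; rewrite !inE; case: eqVneq => [->|] //=; move: hx; rewrite inE => ->.
  have c1 : #|Nc x :&: (@Cl d1 k1)| = d1.+1.
    by rewrite e1 cardsU1 card_NbC // !inE ge_irr.
  have c2 : #|Nc y| = (d2 * k2).+1 by rewrite card_Nc card_Nb_C.
  have := cardsD1 (x, y) (setX (Nc x :&: (@Cl d1 k1)) (Nc y)).
  have hin : (x, y) \in setX (Nc x :&: (@Cl d1 k1)) (Nc y).
    by apply/setXP; split; [apply/setIP; split => //|]; rewrite !inE eqxx.
  rewrite cardsX c1 c2 hin /= => hc.
  have : d1 * (d2 * k2) + d1 + d2 <= #|setX (Nc x :&: (@Cl d1 k1)) (Nc y) :\ (x, y)|.
    have hkk : d2 <= d2 * k2 by rewrite leq_pmulr.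
    move: hc hkk; move: #|_| => n; move: (d2 * k2) => m; nia.
  by apply: leq_trans.
-
  exists (setX (Nc x) (Nb y) :|: setX (Nb x :&: (@Cl d1 k1)) [set y]).
    apply/subsetP => -[a b] /setUP [/setXP [ha hb] | /setXP [/setIP [ha hac] /set1P ->]].
      have hbC : b \in (@Cl d2 k2) by apply: (subsetP (Nb_NC_sub hy)).
      apply: memW => //; first by rewrite hbC orbT.
        by rewrite xpair_eqE negb_and; apply/orP; right; apply: contraTneq hb => ->; rewrite /Nb inE ge_irr.
      by rewrite -NcE1.
      by move: hb; rewrite /Nb inE => ->; rewrite orbT.
    apply: memW => //; first by rewrite hac.
      by rewrite xpair_eqE negb_and; apply/orP; left; apply: contraTneq ha => ->; rewrite /Nb inE ge_irr.
      by move: ha; rewrite /Nb inE => ->; rewrite orbT.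
    by rewrite eqxx.
  have hI : setX (Nc x) (Nb y) :&: setX (Nb x :&: (@Cl d1 k1)) [set y] = set0.
    apply/setP => -[a b]; rewrite !inE; apply/negP => /andP [/andP [_ hb] /andP [_ /eqP hby]].
    by move: hb; rewrite hby ge_irr.
  have := cardsUI (setX (Nc x) (Nb y)) (setX (Nb x :&: (@Cl d1 k1)) [set y]).
  rewrite hI cards0 addn0 !cardsX card_Nc (card_Nb_C hx) (card_Nb_NC hk2 hy) (card_NbC hk1) cards1 => ->.
  move: hD2; nia.
-
  exists (setX (Nb x) (Nc y) :|: setX [set x] (Nb y :&: (@Cl d2 k2))).
    apply/subsetP => -[a b] /setUP [/setXP [ha hb] | /setXP [/set1P -> /setIP [hb hbc]]].
      have haC : a \in (@Cl d1 k1) by apply: (subsetP (Nb_NC_sub hx)).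
      apply: memW => //; first by rewrite haC.
        by rewrite xpair_eqE negb_and; apply/orP; left; apply: contraTneq ha => ->; rewrite /Nb inE ge_irr.
        by move: ha; rewrite /Nb inE => ->; rewrite orbT.
      by rewrite -NcE2.
    apply: memW => //; first by rewrite hbc orbT.
      by rewrite xpair_eqE negb_and; apply/orP; right; apply: contraTneq hb => ->; rewrite /Nb inE ge_irr.
      by rewrite eqxx.
    by move: hb; rewrite /Nb inE => ->; rewrite orbT.
  have hI : setX (Nb x) (Nc y) :&: setX [set x] (Nb y :&: (@Cl d2 k2)) = set0.
    apply/setP => -[a b]; rewrite !inE; apply/negP => /andP [/andP [ha _] /andP [/eqP hax _]].
    by move: ha; rewrite hax ge_irr.
  have := cardsUI (setX (Nb x) (Nc y)) (setX [set x] (Nb y :&: (@Cl d2 k2))).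
  rewrite hI cards0 addn0 !cardsX card_Nc (card_Nb_NC hk1 hx) (card_Nb_C hy) (card_NbC hk2) cards1 => ->.
  move: hD1; nia.
- by move: hvS; rewrite inE (negbTE hx) (negbTE hy).
Qed.

Theorem mainTheorem8 (k1 k2 d1 d2 : nat) :
  0 < k1 -> 0 < k2 -> 0 < d1 -> 0 < d2 ->
  exists (T1 T2 : finType) (e1 : rel T1) (e2 : rel T2),
    simple_graph e1 /\ simple_graph e2 /\
    maxdeg e1 = k1 * d1 /\ maxdeg e2 = k2 * d2 /\
    is_degeneracy e1 d1 /\ is_degeneracy e2 d2 /\
    is_degeneracy (strong_prod e1 e2)
          (d1 + d2 + minn (d1 * (k2 * d2)) (d2 * (k1 * d1))).
Proof.
move=> hk1 hk2 hd1 hd2.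
exists (GT d1 k1), (GT d2 k2), (@ge d1 k1), (@ge d2 k2).
have s1 := @ge_simple d1 k1; have s2 := @ge_simple d2 k2.
have m1 := maxdeg_ge d1 hk1; have m2 := maxdeg_ge d2 hk2.
have g1 := degen_ge d1 hk1; have g2 := degen_ge d2 hk2.
do 6 (split => //).
have l1 := geq_minl (d1 * (k2 * d2)) (d2 * (k1 * d1)).
have l2 := geq_minr (d1 * (k2 * d2)) (d2 * (k1 * d1)).
split; last first.
  apply: (prod_lower hk1 hk2); [rewrite [d2 * k2]mulnC | rewrite [d1 * k1]mulnC]; lia.
case: (leqP (d1 * (k2 * d2)) (d2 * (k1 * d1))) => h.
  have -> : d1 + d2 + d1 * (k2 * d2) = d1 * (k2 * d2).+1 + d2 by rewrite mulnS; lia.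
  exact: prod_upper s1 s2 g1.1 g2.1 (eq_leq m2).
have -> : d1 + d2 + d2 * (k1 * d1) = d2 * (k1 * d1).+1 + d1 by rewrite mulnS; lia.
exact: prod_upper2 s1 s2 g1.1 g2.1 (eq_leq m1).
Qed.
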